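(* Let $\mathcal{K}=(\mathcal{R},\mathcal{T})$ be an ME-consistent $\mathcal{ALCP}$ knowledge base over $\mathcal{L}$, $C,D$ concepts, and $\kappa\in\mathcal{L}$ with $P^{ME}_{\mathcal{R}}(\kappa)>0$. Then $$\mathcal{B}^{s}_{\mathcal{K}}(C\sqsubseteq D\mid\kappa)=\frac{\sum_{w\in\mathrm{Int}(\mathcal{L}),\ \mathcal{T}_w\models C\sqsubseteq D,\ w\models\kappa}P^{ME}_{\mathcal{R}}(w)}{P^{ME}_{\mathcal{R}}(\kappa)}.$$
   Context: $\mathcal{L}$ is a propositional language over a finite set of variables; $\mathrm{Int}(\mathcal{L})$ is the set of truth assignments. A probability distribution over $\mathcal{L}$ is $P:\mathrm{Int}(\mathcal{L})\to[0,1]$ summing to $1$, with $P(\phi)=\sum_{v\models\phi}P(v)$. A probabilistic constraint is $c_0+\sum_{i=1}^k c_i\,\mathsf{p}(\phi_i)\ge 0$ ($c_i\in\mathbb{R}$, $\phi_i\in\mathcal{L}$), satisfied by $P$ iff $c_0+\sum_ic_iP(\phi_i)\ge0$; $\mathrm{Mod}(\mathcal{R})$ is the set of distributions satisfying all constraints in $\mathcal{R}$; for consistent $\mathcal{R}$, $P^{ME}_{\mathcal{R}}$ is the unique maximizer in $\mathrm{Mod}(\mathcal{R})$ of $H(P)=-\sum_vP(v)\log P(v)$. Concepts: $C::=A\mid\neg C\mid C\sqcap C\mid\exists r.C$. An $\mathcal{L}$-GCI is $\langle C\sqsubseteq D:\kappa\rangle$, $\kappa\in\mathcal{L}$; an $\mathcal{L}$-TBox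 is a finite set of them; a KB is $\mathcal{K}=(\mathcal{R},\mathcal{T})$. A possible world $\mathcal{I}=(\Delta^{\mathcal{I}},\cdot^{\mathcal{I}},v^{\mathcal{I}})$ is a classical $\mathcal{ALC}$ interpretation together with $v^{\mathcal{I}}\in\mathrm{Int}(\mathcal{L})$; it models $\langle C\sqsubseteq D:\kappa\rangle$ iff $v^{\mathcal{I}}\not\models\kappa$ or $C^{\mathcal{I}}\subseteq D^{\mathcal{I}}$. For $w\in\mathrm{Int}(\mathcal{L})$, $\mathcal{T}_w=\{C\sqsubseteq D\mid\langle C\sqsubseteq D:\kappa\rangle\in\mathcal{T}, w\models\kappa\}$, and $\mathcal{T}_w\models C\sqsubseteq D$ means $C^{\mathcal{I}}\subseteq D^{\mathcal{I}}$ in every classical interpretation satisfying all inclusions of $\mathcal{T}_w$. An $\mathcal{ALCP}$-interpretation $\mathcal{P}=(\mathfrak{I},P_{\mathfrak{I}})$ is a nonempty finite set of possible worlds with a probability distribution on it; $P^{\mathcal{P}}(v)=\sum_{\mathcal{I}\in\mathfrak{I},v^{\mathcal{I}}=v}P_{\mathfrak{I}}(\mathcal{I})$. $\mathcal{P}$ is an ME-$\mathcal{ALCP}$-model of $\mathcal{K}$ iff all its worlds model every GCI of $\mathcal{T}$ and $P^{\mathcal{P}}=P^{ME}_{\mathcal{R}}$; $\mathrm{Mod}_{ME}(\mathcal{K})$ is the set of these; $\mathcal{K}$ is ME-consistent iff it is nonempty. $\Pr_{\mathcal{P}}(C\sqsubseteq D\mid\kappa)=\big(\sum_{\mathcal{I}\in\mathfrak{I},v^{\mathcal{I}}\models\kappa,C^{\mathcal{I}}\subseteq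 D^{\mathcal{I}}}P_{\mathfrak{I}}(\mathcal{I})\big)/\big(\sum_{\mathcal{I}\in\mathfrak{I},v^{\mathcal{I}}\models\kappa}P_{\mathfrak{I}}(\mathcal{I})\big)$. The sceptical degree of belief is $\mathcal{B}^{s}_{\mathcal{K}}(C\sqsubseteq D\mid\kappa)=\inf_{\mathcal{P}\in\mathrm{Mod}_{ME}(\mathcal{K})}\Pr_{\mathcal{P}}(C\sqsubseteq D\mid\kappa)$. *)

(* Defs.v *)
From HB Require Import structures.
From mathcomp Require Import all_boot all_order all_algebra.
From mathcomp Require Import boolp classical_sets reals exp.
From Stdlib Require List.
Set Implicit Arguments. Unset Strict Implicit. Unset Printing Implicit Defensive.
Import Order.TTheory GRing.Theory Num.Theory.
Local Open Scope ring_scope.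

Inductive pform (V : Type) : Type :=
  | FVar of V
  | FTop
  | FBot
  | FNot of pform V
  | FAnd of pform V & pform V
  | FOr of pform V & pform V
  | FImp of pform V & pform V.

Definition assignment (V : finType) := {ffun V -> bool}.

Fixpoint fsat (V : finType) (w : assignment V) (phi : pform V) : bool :=
  match phi with
  | FVar x => w x
  | FTop => true
  | FBot => false
  | FNot p => ~~ fsat w p
  | FAnd p q => fsat w p && fsat w q
  | FOr p q => fsat w p || fsat w q
  | FImp p q => fsat w p ==> fsat w q
  end.

Section Prob.
Variables (R : realType) (V : finType).

Definition is_distr (P : assignment V -> R) : Prop :=
  (forall v, 0 <= P v) /\ \sum_(v : assignment V) P v = 1.

Definition probf (P : assignment V -> R) (phi : pform V) : R :=
  \sum_(v : assignment V | fsat v phi) P v.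

Record pconstr := PConstr { pc0 : R ; pcterms : seq (R * pform V) }.

Definition sat_constr (P : assignment V -> R) (c : pconstr) : Prop :=
  0 <= pc0 c + \sum_(t <- pcterms c) t.1 * probf P t.2.

Definition is_model_of (Rc : seq pconstr) (P : assignment V -> R) : Prop :=
  is_distr P /\ forall c, List.In c Rc -> sat_constr P c.

(* entropy H(P) = - sum_v P(v) log P(v)  (0 log 0 = 0 since 0 * _ = 0) *)
Definition entropy (P : assignment V -> R) : R :=
  - \sum_(v : assignment V) P v * ln (P v).

Definition is_ME (Rc : seq pconstr) (P : assignment V -> R) : Prop :=
  is_model_of Rc P /\ forall Q, is_model_of Rc Q -> entropy Q <= entropy P.
End Prob.

Arguments PConstr {R V}.

Section ALC.
Variables (NC NR : Type).

Inductive concept : Type :=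
  | CAtom of NC
  | CNeg of concept
  | CAnd of concept & concept
  | CEx of NR & concept.

Record interp := Interp {
  idom : Type ;
  idom_ne : inhabited idom ;
  iconc : NC -> idom -> Prop ;
  irole : NR -> idom -> idom -> Prop }.

Fixpoint csem (I : interp) (C : concept) : idom I -> Prop :=
  match C with
  | CAtom A => @iconc I A
  | CNeg C' => fun x => ~ @csem I C' x
  | CAnd C1 C2 => fun x => @csem I C1 x /\ @csem I C2 x
  | CEx r C' => fun x => exists y, @irole I r x y /\ @csem I C' y
  end.

Definition csub (I : interp) (C D : concept) : Prop :=
  forall x, @csem I C x -> @csem I D x.

Definition entails (Tc : seq (concept * concept)) (C D : concept) : Prop :=
  forall I : interp, (forall g, List.In g Tc -> @csub I g.1 g.2) -> @csub I C D.
End ALC.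

Section ALCP.
Variables (R : realType) (V : finType) (NC NR : Type).

Record gci := GCI { gC : concept NC NR ; gD : concept NC NR ; gk : pform V }.

Definition Tw (Tc : seq gci) (w : assignment V) : seq (concept NC NR * concept NC NR) :=
  [seq (gC g, gD g) | g <- Tc & fsat w (gk g)].

Record pworld := PWorld { pwI : interp NC NR ; pwv : assignment V }.

Definition pw_models (I : pworld) (g : gci) : Prop :=
  ~~ fsat (pwv I) (gk g) \/ csub (pwI I) (gC g) (gD g).

Record alcp_interp := ALCPInterp {
  aidx : finType ;
  aworld : aidx -> pworld ;
  aprob : aidx -> R ;
  aprob_ge0 : forall i, 0 <= aprob i ;
  aprob_sum1 : \sum_(i : aidx) aprob i = 1 }.

Definition marg (P : alcp_interp) (v : assignment V) : R :=
  \sum_(i : aidx P | pwv (aworld i) == v) aprob i.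

Definition is_ME_model (Tc : seq gci) (Pme : assignment V -> R)
    (P : alcp_interp) : Prop :=
  (forall (i : aidx P) g, List.In g Tc -> pw_models (aworld i) g) /\
  (forall v, marg P v = Pme v).

Definition ME_consistent (Tc : seq gci) (Pme : assignment V -> R) : Prop :=
  exists P, is_ME_model Tc Pme P.

Definition cond_pr (P : alcp_interp) (C D : concept NC NR) (k : pform V) : R :=
  (\sum_(i : aidx P | `[< fsat (pwv (aworld i)) k /\ csub (pwI (aworld i)) C D >])
      aprob i) /
  (\sum_(i : aidx P | fsat (pwv (aworld i)) k) aprob i).

Definition sceptical_belief (Tc : seq gci) (Pme : assignment V -> R)
    (C D : concept NC NR) (k : pform V) : R :=
  inf [set x | exists P, is_ME_model Tc Pme P /\ x = cond_pr P C D k].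
End ALCP.

(* Main.v *)
Require Import Defs.
From HB Require Import structures.
From mathcomp Require Import all_boot all_order all_algebra.
From mathcomp Require Import boolp classical_sets reals exp.
From Stdlib Require Import Classical.
From Stdlib Require List.
Import Order.TTheory GRing.Theory Num.Theory.
Local Open Scope ring_scope.
Set Implicit Arguments.

Section Aux.
Variables (R : realType) (V : finType) (NC NR : Type).

Lemma Tw_inv (Tc : seq (gci V NC NR)) w g :
  List.In g (Tw Tc w) -> exists g', List.In g' Tc /\ fsat w (gk g') /\ g = (gC g', gD g').
Proof.
elim: Tc => [|h t IH] //=; rewrite /Tw /=; case E: (fsat w (gk h)) => /=.
- case=> [<-|/IH [g' [? [? ?]]]]; first by exists h; split; [left|].
  by exists g'; split; [right|].
- by move/IH => [g' [? [? ?]]]; exists g'; split; [right|].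
Qed.

Lemma Tw_in (Tc : seq (gci V NC NR)) w g :
  List.In g Tc -> fsat w (gk g) -> List.In (gC g, gD g) (Tw Tc w).
Proof.
elim: Tc => [|h t IH] //=; rewrite /Tw /=.
case=> [->|Ht] Hf; first by rewrite Hf; left.
by case: (fsat w (gk h)) => /=; [right|]; apply: IH.
Qed.

Lemma world_sat (Tc : seq (gci V NC NR)) (W : pworld V NC NR) :
  (forall g, List.In g Tc -> pw_models W g) ->
  forall g, List.In g (Tw Tc (pwv W)) -> csub (pwI W) g.1 g.2.
Proof.
move=> HW g /Tw_inv [g' [Hin [Hf ->]]] /=.
by case: (HW _ Hin) => //; rewrite Hf.
Qed.

Lemma sum_by_world (P : alcp_interp R V NC NR) (Q : pred (assignment V)) :
  \sum_(i : aidx P | Q (pwv (aworld i))) aprob i = \sum_(w | Q w) marg P w.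
Proof.
rewrite (partition_big (fun i => pwv (aworld i)) Q) //=.
apply: eq_bigr => w Qw; rewrite /marg; apply: eq_bigl => i.
by case: eqP => [->|]; rewrite ?Qw ?andbF ?andbT.
Qed.
End Aux.

Theorem theorem3 (R : realType) (V : finType) (NC NR : Type)
  (Rc : seq (pconstr R V)) (Tc : seq (gci V NC NR))
  (Pme : assignment V -> R)
  (HME : is_ME Rc Pme)
  (Hcons : ME_consistent Tc Pme)
  (C D : concept NC NR) (k : pform V)
  (Hk : 0 < probf Pme k) :
  sceptical_belief Tc Pme C D k =
    (\sum_(w : assignment V | `[< entails (Tw Tc w) C D >] && fsat w k) Pme w)
      / probf Pme k.
Proof.
set t := _ / _.
have den : forall P, is_ME_model Tc Pme P ->
    \sum_(i : aidx P | fsat (pwv (aworld i)) k) aprob i = probf Pme k.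
  move=> P [_ Hm]; rewrite (@sum_by_world _ _ _ _ P (fun w => fsat w k)).
  by apply: eq_bigr => w _; rewrite Hm.
have lb : forall P, is_ME_model Tc Pme P -> t <= cond_pr P C D k.
  move=> P HP; rewrite /cond_pr den // ler_pM2r ?invr_gt0 //.
  case: HP => Hw Hm.
  rewrite -(eq_bigr _ (fun w _ => Hm w)).
  rewrite -(@sum_by_world _ _ _ _ P (fun w => `[< entails (Tw Tc w) C D >] && fsat w k)).
  rewrite [X in X <= _]big_mkcond [X in _ <= X]big_mkcond /=.
  apply: ler_sum => i _.
  case E1: (_ && _); last by case: ifP => // _; exact: aprob_ge0.
  move/andP: E1 => [/asboolP He Hf].
  rewrite ifT //; apply/asboolP; split=> //; apply: He.
  exact: (@world_sat _ _ _ _ _ (Hw i)).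
have [P0 [Hw0 Hm0]] := Hcons.
have Hch : forall i : aidx P0, exists W : pworld V NC NR,
    pwv W = pwv (aworld i) /\ (forall g, List.In g Tc -> pw_models W g) /\
    (csub (pwI W) C D <-> entails (Tw Tc (pwv W)) C D).
  move=> i; case: (pselect (entails (Tw Tc (pwv (aworld i))) C D)) => He.
    exists (aworld i); split=> //; split; first exact: Hw0.
    split=> // _; apply: He; exact: (@world_sat _ _ _ _ _ (Hw0 i)).
  have [I HI] := not_all_ex_not _ _ He.
  have [HI1 HI2] := imply_to_and _ _ HI.
  exists (PWorld I (pwv (aworld i))); split=> //; split.
    move=> g Hg; rewrite /pw_models /=.
    case Hf: (fsat (pwv (aworld i)) (gk g)); [right|by left].
    exact (HI1 _ (@Tw_in _ _ _ _ _ _ Hg Hf)).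
  by split=> // /=.
have [f Hf] := choice Hch.
pose P1 := @ALCPInterp R V NC NR (aidx P0) f (@aprob _ _ _ _ P0)
   (@aprob_ge0 _ _ _ _ P0) (@aprob_sum1 _ _ _ _ P0).
have HP1 : is_ME_model Tc Pme P1.
  split; first by move=> i g; case: (Hf i) => _ [H _]; exact: H.
  move=> v; rewrite -Hm0 /marg /=; apply: eq_bigl => i.
  by case: (Hf i) => ->.
have Ht : cond_pr P1 C D k = t.
  rewrite /cond_pr den //; congr (_ / _).
  rewrite -(eq_bigr _ (fun w _ => (proj2 HP1) w)).
  rewrite -(@sum_by_world _ _ _ _ P1 (fun w => `[< entails (Tw Tc w) C D >] && fsat w k)).
  apply: eq_bigl => i /=; case: (Hf i) => _ [_ Hi].
  apply/asboolP/andP; case; [move=> Hk1 /Hi Hc | move=> /asboolP Hc Hk1];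
    split=> //; [exact/asboolP | exact/Hi].
apply/eqP; rewrite eq_le; apply/andP; split.
  apply: ge_inf; first by exists t => x [P [HP ->]]; exact: lb.
  by exists P1; split.
apply: lb_le_inf; first by exists t, P1.
by move=> x [P [HP ->]]; exact: lb.
Qed.
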